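(* Let $X$ be a compact topological space, let $D\subseteq X$, let $\overline{D}$ be the closure of $D$ in $X$, and put $\partial D:=\overline{D}\setminus D$. Let $Y$ be a Hausdorff topological space and let $f\colon\overline{D}\to Y$ be a continuous map such that $f(D)$ is open in $Y$. Let $E$ be any connected subset of $Y\setminus f(\partial D)$. Then either $E\subseteq f(D)$ or $f(\overline{D})\subseteq Y\setminus E$.
   Context: Note that $\partial D$ is defined as $\overline{D}\setminus D$ (which coincides with the usual boundary when $D$ is open). *)

(* Defs.v *)
From HB Require Import structures.
From mathcomp Require Import all_boot all_order all_algebra.
From mathcomp Require Import all_classical all_reals all_analysis.

(* Main.v *)
Require Import Defs.
From HB Require Import structures.
From mathcomp Require Import all_boot all_order all_algebra.
From mathcomp Require Import all_classical all_reals all_analysis.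
Local Open Scope classical_set_scope.

Theorem mainTheorem1 (X Y : topologicalType) (D : set X) (f : X -> Y) (E : set Y) :
  compact [set: X] ->
  hausdorff_space Y ->
  {within closure D, continuous f} ->
  open (f @` D) ->
  connected E ->
  E `<=` ~` (f @` (closure D `\` D)) ->
  E `<=` f @` D \/ f @` closure D `<=` ~` E.
Proof.
move=> cX hY cf oD cE Ebd.
have ccl : compact (f @` closure D).
  apply: continuous_compact => //.
  exact: (subclosed_compact (@closed_closure _ D) cX).
have clf : closed (f @` closure D) by exact: compact_closed.
have eq1 : E `&` f @` D = E `&` f @` closure D.
  apply/seteqP; split => y /= [Ey [x Dx fxy]]; subst y.
    by hnf; split => //; exists x => //; exact: subset_closure.
  hnf; split => //; exists x => //.
  apply: contrapT => nDx; apply: (Ebd _ Ey); exists x => //.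
have [ne|e0] := pselect ((E `&` f @` D) !=set0).
  left; have H : E `&` f @` D = E.
    apply: cE => //; first by exists (f @` D).
    by exists (f @` closure D).
  move=> y Ey; have : (E `&` f @` D) y by rewrite H.
  by case.
right => y fy Ey; apply: e0; exists y.
have h : (E `&` f @` closure D) y by split.
rewrite eq1; exact: h.
Qed.
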